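(* Let $\alpha,\beta\in[0,1]$ with $\alpha+\beta=1$, let $0<\delta<1/24$, and let $\xi$ be a real number with $\inf_{n\in\mathbb{N}} n\|n\xi\|\geqslant\delta$. Let $p$ be a positive integer and put $q=\left[\frac{p^2}{\delta}\log\frac{p^2}{\delta}\right]+1$. Let $$K=\Big\{x\in\mathbb{N}:\ p<x\leqslant q,\ \|x\xi\|\leqslant\frac{\delta}{(x\log(x+1))^\beta}\Big\}.$$ Then $$\sum_{x\in K}\frac{1}{(x\log(x+1))^\alpha}\leqslant 2^6\big(1+\log(1/\delta)\big).$$
   Context: $\|t\|$ denotes the distance from $t$ to the nearest integer; $[\cdot]$ is the integer part; $\log$ is the natural logarithm. *)

(* Defs.v *)
From Stdlib Require Import Reals Lra Lia List.
Open Scope R_scope.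

(* fractional part {t} = t - floor t  (Int_part = floor) *)
Definition frac_part (t : R) : R := t - IZR (Int_part t).

Definition dist_int (t : R) : R := Rmin (frac_part t) (1 - frac_part t).

Definition qbound (p : nat) (delta : R) : Z :=
  (Int_part (INR p ^ 2 / delta * ln (INR p ^ 2 / delta)) + 1)%Z.

(* sum over x in K of 1 / (x log(x+1))^alpha, where x ranges over the
   naturals p < x <= q, i.e. x in [p+1, q] *)
Definition K_sum (alpha beta delta xi : R) (p : nat) : R :=
  fold_right Rplus 0
    (map (fun x : nat =>
            if Rle_dec (dist_int (INR x * xi))
                       (delta / Rpower (INR x * ln (INR x + 1)) beta)
            then / Rpower (INR x * ln (INR x + 1)) alpha
            else 0)
         (seq (S p) (Z.to_nat (qbound p delta) - p))).

(* Main.v *)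
Require Import Defs.
From Stdlib Require Import Reals Lra Lia ZArith List.
Open Scope R_scope.

Lemma ln_le' a b : 0 < a -> a <= b -> ln a <= ln b.
Proof. intros Ha Hab. destruct (Rle_lt_or_eq_dec _ _ Hab) as [h|h].
 left; apply ln_increasing; auto. subst; lra. Qed.

Lemma ln_le_sub1 z : 0 < z -> ln z <= z - 1.
Proof. intros Hz. pose proof (exp_ineq1_le (ln z)). rewrite exp_ln in H; lra. Qed.

Lemma ln_ge_1m z : 0 < z -> 1 - / z <= ln z.
Proof. intros Hz. pose proof (ln_le_sub1 (/ z) (Rinv_0_lt_compat _ Hz)).
 rewrite ln_Rinv in H; lra. Qed.

Lemma ln_diff_ge a b : 0 < a -> a <= b -> (b - a) / b <= ln b - ln a.
Proof. intros Ha Hab.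
 assert (0 < b) by lra.
 pose proof (ln_ge_1m (b / a)).
 assert (0 < b / a) by (apply Rdiv_lt_0_compat; lra).
 specialize (H0 H1). unfold Rdiv in H0. rewrite ln_mult, ln_Rinv in H0 by (auto; apply Rinv_0_lt_compat; lra).
 replace ((b - a)/b) with (1 - / (b * / a)); [lra|]. field; lra. Qed.

Lemma ln3_ge1 : 1 <= ln 3.
Proof. rewrite <- (ln_exp 1). apply ln_le'. apply exp_pos. apply exp_le_3. Qed.

Lemma frac_bounds t : 0 <= Defs.frac_part t < 1.
Proof. unfold Defs.frac_part. pose proof (base_Int_part t). lra. Qed.

Lemma dist_int_le t k : dist_int t <= Rabs (t - IZR k).
Proof.
 unfold dist_int. pose proof (frac_bounds t). pose proof (base_Int_part t).
 unfold Defs.frac_part in *. set (n := Int_part t) in *.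
 destruct (Z_le_gt_dec k n) as [h|h].
 - apply IZR_le in h. eapply Rle_trans. apply Rmin_l. rewrite Rabs_right; lra.
 - assert (IZR k >= IZR n + 1). { rewrite <- plus_IZR. apply Rle_ge, IZR_le. lia. }
   eapply Rle_trans. apply Rmin_r. rewrite Rabs_left1; lra.
Qed.

Lemma dist_int_ex t : exists k, dist_int t = Rabs (t - IZR k).
Proof.
 unfold dist_int. pose proof (frac_bounds t). unfold Defs.frac_part in *.
 destruct (Rle_dec (t - IZR (Int_part t)) (1 - (t - IZR (Int_part t)))).
 - exists (Int_part t). rewrite Rmin_left by lra. rewrite Rabs_right; lra.
 - exists (Int_part t + 1)%Z. rewrite Rmin_right by lra. rewrite plus_IZR.
   rewrite Rabs_left1; lra.
Qed.

Lemma dist_int_sub a b : dist_int (a - b) <= dist_int a + dist_int b.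
Proof.
 destruct (dist_int_ex a) as [k1 h1]; destruct (dist_int_ex b) as [k2 h2].
 eapply Rle_trans. apply (dist_int_le _ (k1 - k2)). rewrite minus_IZR, h1, h2.
 replace (a - b - (IZR k1 - IZR k2)) with ((a - IZR k1) + - (b - IZR k2)) by ring.
 eapply Rle_trans. apply Rabs_triang. rewrite Rabs_Ropp. lra. Qed.

Definition PP (x : nat) := INR x * ln (INR x + 1).
Definition ff (x : nat) := ln (ln (INR x + 1)).

Lemma L_ge1 x : (2 <= x)%nat -> 1 <= ln (INR x + 1).
Proof. intros h. eapply Rle_trans. apply ln3_ge1. apply ln_le'. lra.
 apply le_INR in h. simpl in h. lra. Qed.

Lemma PP_pos x : (2 <= x)%nat -> 0 < PP x.
Proof. intros h. pose proof (L_ge1 x h). apply le_INR in h. simpl in h. unfold PP. nra. Qed.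

Lemma term_eq alpha beta x : (2 <= x)%nat -> alpha + beta = 1 ->
  / Rpower (PP x) alpha = Rpower (PP x) beta / PP x.
Proof. intros h hab. pose proof (PP_pos x h).
 assert (Rpower (PP x) alpha * Rpower (PP x) beta = PP x).
 { rewrite <- Rpower_plus, hab, Rpower_1; auto. }
 assert (0 < Rpower (PP x) alpha) by (unfold Rpower; apply exp_pos).
 assert (0 < Rpower (PP x) beta) by (unfold Rpower; apply exp_pos).
 set (u := Rpower (PP x) alpha) in *. set (v := Rpower (PP x) beta) in *.
 set (w := PP x) in *. rewrite <- H0. field. split; lra. Qed.

Section S.
Variables alpha beta delta xi : R.
Hypothesis hab : alpha + beta = 1.
Hypothesis hb : 0 <= beta.
Hypothesis hd : 0 < delta.
Hypothesis hxi : forall n : nat, (1 <= n)%nat -> delta <= INR n * dist_int (INR n * xi).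
Definition inK x := dist_int (INR x * xi) <= delta / Rpower (PP x) beta.

Lemma pow_le_x x : (2 <= x)%nat -> inK x -> Rpower (PP x) beta <= INR x.
Proof. intros h hk. unfold inK in hk. pose proof (hxi x ltac:(lia)).
 assert (0 < Rpower (PP x) beta) by (unfold Rpower; apply exp_pos).
 assert (0 <= INR x) by apply pos_INR.
 assert (delta <= INR x * (delta / Rpower (PP x) beta)).
 { eapply Rle_trans. apply H. apply Rmult_le_compat_l; auto. }
 set (v := Rpower (PP x) beta) in *.
 apply (Rmult_le_reg_r delta); auto.
 apply Rmult_le_compat_r with (r := v) in H2; [|lra].
 replace (INR x * (delta / v) * v) with (INR x * delta) in H2 by (field; lra). lra. Qed.

Lemma term_le_invL x : (2 <= x)%nat -> inK x -> / Rpower (PP x) alpha <= / ln (INR x + 1).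
Proof. intros h hk. rewrite term_eq with (beta := beta); auto.
 pose proof (pow_le_x x h hk). pose proof (PP_pos x h). pose proof (L_ge1 x h).
 unfold PP in *. assert (0 < INR x) by (apply lt_0_INR; lia).
 apply (Rmult_le_reg_r (INR x * ln (INR x + 1))); auto.
 field_simplify; lra. Qed.

Lemma pow_le_gap x y : (2 <= x)%nat -> (x < y)%nat -> inK x -> inK y ->
  Rpower (PP x) beta <= 2 * (INR y - INR x).
Proof. intros h hxy kx ky. unfold inK in *.
 assert (hm : Rpower (PP x) beta <= Rpower (PP y) beta).
 { apply Rle_Rpower_l; auto. split. apply PP_pos; auto. unfold PP.
   pose proof (L_ge1 x h). assert (INR x <= INR y) by (apply le_INR; lia).
   assert (ln (INR x + 1) <= ln (INR y + 1)) by (apply ln_le'; [pose proof (pos_INR x)|]; lra).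
   pose proof (pos_INR x). nra. }
 assert (0 < Rpower (PP x) beta) by (unfold Rpower; apply exp_pos).
 assert (delta / Rpower (PP y) beta <= delta / Rpower (PP x) beta).
 { unfold Rdiv. apply Rmult_le_compat_l. lra. apply Rinv_le_contravar; auto. }
 pose proof (hxi (y - x) ltac:(lia)). rewrite minus_INR in H1 by lia.
 replace ((INR y - INR x) * xi) with (INR y * xi - INR x * xi) in H1 by ring.
 pose proof (dist_int_sub (INR y * xi) (INR x * xi)).
 assert (0 <= INR y - INR x) by (assert (INR x <= INR y) by (apply le_INR; lia); lra).
 assert (delta <= (INR y - INR x) * (2 * (delta / Rpower (PP x) beta))).
 { eapply Rle_trans. apply H1. apply Rmult_le_compat_l; auto. lra. }
 apply (Rmult_le_reg_r (delta / Rpower (PP x) beta)).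
 apply Rdiv_lt_0_compat; auto.
 replace (Rpower (PP x) beta * (delta / Rpower (PP x) beta)) with delta by (field; lra).
 lra. Qed.

Lemma key x y : (2 <= x)%nat -> (x < y)%nat -> inK x -> inK y ->
  / Rpower (PP x) alpha <= 12 * (ff y - ff x).
Proof. intros h hxy kx ky.
 pose proof (term_le_invL x h kx) as T1.
 pose proof (pow_le_gap x y h hxy kx ky) as G.
 rewrite term_eq with (beta := beta) in * by auto.
 pose proof (L_ge1 x h) as La.
 assert (hX : 2 <= INR x) by (apply le_INR in h; simpl in h; lra).
 assert (hY : INR x + 1 <= INR y) by (rewrite <- S_INR; apply le_INR; lia).
 unfold ff. set (a := ln (INR x + 1)) in *. set (b := ln (INR y + 1)).
 assert (hab' : a <= b) by (apply ln_le'; lra).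
 pose proof ln_lt_2.
 destruct (Rle_dec (INR y + 1) (2 * (INR x + 1))) as [c|c].
 -
   pose proof (ln_diff_ge a b ltac:(lra) hab') as D1.
   pose proof (ln_diff_ge (INR x + 1) (INR y + 1) ltac:(lra) ltac:(lra)) as D2.
   fold a b in D2.
   assert (hb2 : b <= ln 2 + a).
   { unfold a, b. rewrite <- ln_mult by lra. apply ln_le'; lra. }
   assert (ln 2 <= a) by (unfold a; apply ln_le'; lra).
   assert (Hb : 0 < b) by lra.
   assert (b - a >= (INR y - INR x) / (INR y + 1)).
   { replace ((INR y - INR x) / (INR y + 1)) with ((INR y + 1 - (INR x + 1)) / (INR y + 1)) by (field; lra). lra. }
   assert (E: (INR y - INR x) / (6 * INR x * a) <= ln b - ln a).
   { eapply Rle_trans; [|apply D1].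
     apply Rle_trans with ((INR y - INR x) / (INR y + 1) / b).
     + unfold Rdiv. rewrite (Rmult_assoc (INR y - INR x)). apply Rmult_le_compat_l. lra.
       rewrite <- Rinv_mult. apply Rinv_le_contravar. nra.
       assert ((INR y + 1) * b <= 3 * INR x * (2 * a)). { apply Rmult_le_compat; lra. } lra.
     + unfold Rdiv. apply Rmult_le_compat_r. left; apply Rinv_0_lt_compat; lra. lra. }
   unfold PP in T1, G |- *. fold a in T1, G |- *.
   apply Rle_trans with (2 * (INR y - INR x) / (INR x * a)).
   + unfold Rdiv. apply Rmult_le_compat_r; auto. left; apply Rinv_0_lt_compat; nra.
   + replace (2 * (INR y - INR x) / (INR x * a)) with (12 * ((INR y - INR x) / (6 * INR x * a))) by (field; lra).
     lra.
 -
   assert (hb2 : ln 2 + a <= b).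
   { unfold a, b. rewrite <- ln_mult by lra. apply ln_le'; lra. }
   pose proof (ln_diff_ge a (a + ln 2) ltac:(lra) ltac:(lra)) as D1.
   assert (ln 2 <= a) by (unfold a; apply ln_le'; lra).
   assert (ln (a + ln 2) <= ln b) by (apply ln_le'; lra).
   assert (ln 2 / (2 * a) <= (a + ln 2 - a) / (a + ln 2)).
   { replace (a + ln 2 - a) with (ln 2) by ring. unfold Rdiv. apply Rmult_le_compat_l. lra.
     apply Rinv_le_contravar; lra. }
   eapply Rle_trans. apply T1.
   apply Rle_trans with (12 * (ln 2 / (2 * a))); [|lra].
   apply (Rmult_le_reg_r a). lra. field_simplify; lra.
Qed.
End S.

Lemma ff_mono x y : (2 <= x)%nat -> (x <= y)%nat -> ff x <= ff y.
Proof. intros h hxy. unfold ff. pose proof (L_ge1 x h).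
 apply ln_le'. lra. apply ln_le'. pose proof (pos_INR x); lra.
 apply le_INR in hxy; lra. Qed.

Section S2.
Variables alpha beta delta xi : R.
Hypothesis hab : alpha + beta = 1.
Hypothesis hb : 0 <= beta.
Hypothesis hd : 0 < delta.
Hypothesis hxi : forall n : nat, (1 <= n)%nat -> delta <= INR n * dist_int (INR n * xi).
Variable N : nat.

Definition FF := (fun x : nat =>
            if Rle_dec (dist_int (INR x * xi))
                       (delta / Rpower (INR x * ln (INR x + 1)) beta)
            then / Rpower (INR x * ln (INR x + 1)) alpha
            else 0).

Lemma claim n : forall a, (2 <= a)%nat -> (a + n <= N + 1)%nat ->
  fold_right Rplus 0 (map FF (seq a n)) = 0 \/
  exists y, (a <= y)%nat /\ (y < a + n)%nat /\ inK beta delta xi y /\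
     fold_right Rplus 0 (map FF (seq a n)) <= 1 + 12 * (ff N - ff y).
Proof.
 induction n as [|n IH]; intros a ha hn.
 - left; reflexivity.
 - simpl. destruct (IH (S a) ltac:(lia) ltac:(lia)) as [E|[y [h1 [h2 [h3 h4]]]]];
   (change (FF a) with (if Rle_dec (dist_int (INR a * xi))
                       (delta / Rpower (INR a * ln (INR a + 1)) beta)
            then / Rpower (INR a * ln (INR a + 1)) alpha
            else 0));
   destruct (Rle_dec _ _) as [k|k].
   + right. exists a. repeat split; try lia. exact k.
     rewrite E. pose proof (term_le_invL alpha beta delta xi hab hd hxi a ha k).
     pose proof (L_ge1 a ha). pose proof (ff_mono a N ha ltac:(lia)).
     unfold PP in *. assert (/ ln (INR a + 1) <= 1).
     { pose proof (Rinv_le_contravar 1 _ Rlt_0_1 H0). rewrite Rinv_1 in H2. exact H2. } lra.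
   + left. rewrite E. lra.
   + right. exists a. repeat split; try lia. exact k.
     pose proof (key alpha beta delta xi hab hb hd hxi a y ha ltac:(lia) k h3).
     unfold PP in *. lra.
   + right. exists y. repeat split; try lia. exact h3. lra.
Qed.
End S2.

Lemma bound_ff (delta : R) (p : nat) : 0 < delta < 1/24 -> (0 < p)%nat ->
  (S p <= Z.to_nat (qbound p delta))%nat ->
  ff (Z.to_nat (qbound p delta)) - ff (S p) <= 3 + 2 * ln (1 / delta).
Proof.
 intros [d0 d1] hp hN.
 set (N := Z.to_nat (qbound p delta)) in *.
 set (A := INR p ^ 2 / delta).
 set (u := ln (1 / delta)).
 assert (hp1 : 1 <= INR p) by (apply le_INR in hp; simpl in hp; lra).
 assert (hA : 24 <= A).
 { unfold A. assert (1 <= INR p ^ 2) by nra. unfold Rdiv.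
   assert (24 <= / delta). { rewrite <- (Rinv_inv 24). apply Rinv_le_contravar. lra. lra. }
   nra. }
 assert (hu : 0 <= u).
 { unfold u. rewrite <- ln_1. apply ln_le'. lra. unfold Rdiv. rewrite Rmult_1_l.
   rewrite <- Rinv_1. apply Rinv_le_contravar; lra. }
 assert (hNA : INR N <= A * ln A + 1).
 { unfold N, qbound. fold A. set (z := Int_part (A * ln A)).
   pose proof (base_Int_part (A * ln A)). fold z in H.
   destruct (Z_lt_le_dec (z + 1) 0) as [c|c].
   - unfold N, qbound in hN. fold A z in hN. replace (Z.to_nat (z + 1)) with 0%nat in hN by (destruct (z+1)%Z; simpl; lia). lia.
   - rewrite INR_IZR_INZ, Z2Nat.id by lia. rewrite plus_IZR. lra. }
 assert (hlnA : ln A <= A - 1) by (apply ln_le_sub1; lra).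
 assert (hN2 : 2 <= INR N) by (apply le_INR in hN; rewrite S_INR in hN; lra).
 assert (hN1 : INR N + 1 <= A * A).
 { assert (0 <= ln A) by (rewrite <- ln_1; apply ln_le'; lra). nra. }
 assert (hlnN : ln (INR N + 1) <= 2 * ln A).
 { replace (2 * ln A) with (ln (A * A)) by (rewrite ln_mult; lra).
   apply ln_le'; lra. }
 assert (hlnA2 : ln A = 2 * ln (INR p) + u).
 { unfold A, u. unfold Rdiv. rewrite ln_mult, Rmult_1_l, ln_pow by (try apply pow_lt; try apply Rinv_0_lt_compat; lra).
   simpl. ring. }
 set (c := ln (INR p + 2)).
 assert (hc : 1 <= c). { eapply Rle_trans. apply ln3_ge1. apply ln_le'; lra. }
 assert (hpc : ln (INR p) <= c) by (apply ln_le'; lra).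
 assert (hm : ln (INR N + 1) <= (4 + 2 * u) * c) by nra.
 assert (h0 : 0 < ln (INR N + 1)). { eapply Rlt_le_trans with (ln 3). pose proof ln3_ge1. lra. apply ln_le'; lra. }
 unfold ff. rewrite S_INR. replace (INR p + 1 + 1) with (INR p + 2) by ring. fold c.
 assert (ln (ln (INR N + 1)) <= ln (4 + 2 * u) + ln c).
 { rewrite <- ln_mult by lra. apply ln_le'; lra. }
 pose proof (ln_le_sub1 (4 + 2 * u) ltac:(lra)). lra.
Qed.

Theorem corollary3 (alpha beta delta xi : R) (p : nat) :
  0 <= alpha <= 1 -> 0 <= beta <= 1 -> alpha + beta = 1 ->
  0 < delta < 1 / 24 ->
  (forall n : nat, (1 <= n)%nat -> delta <= INR n * dist_int (INR n * xi)) ->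
  (0 < p)%nat ->
  K_sum alpha beta delta xi p <= 2 ^ 6 * (1 + ln (1 / delta)).
Proof.
 intros ha hb hab hd hxi hp.
 assert (hu : 0 <= ln (1 / delta)).
 { rewrite <- ln_1. apply ln_le'. lra. unfold Rdiv. rewrite Rmult_1_l.
   rewrite <- Rinv_1. apply Rinv_le_contravar; lra. }
 unfold K_sum. set (N := Z.to_nat (qbound p delta)).
 change (fold_right Rplus 0 (map (FF alpha beta delta xi) (seq (S p) (N - p))) <= 2 ^ 6 * (1 + ln (1 / delta))).
 destruct (le_lt_dec N p) as [c|c].
 - replace (N - p)%nat with 0%nat by lia. simpl. lra.
 - destruct (claim alpha beta delta xi hab (proj1 hb) (proj1 hd) hxi N (N - p) (S p) ltac:(lia) ltac:(lia))
     as [E|[y [h1 [h2 [h3 h4]]]]].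
   + rewrite E. lra.
   + pose proof (bound_ff delta p hd hp c). fold N in H.
     pose proof (ff_mono (S p) y ltac:(lia) h1). lra.
Qed.
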